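(* Let $q\geq 3$, $n\ge 2$, $1\leq r\leq n$, and let $U$ be the set of all $n\times n$ hermitian matrices over $\mathbb{F}_{q^2}$ of rank $r$. Let $\Phi:U\to U$ be a bijection that preserves adjacency in both directions, i.e. $\operatorname{rank}(A-B)=1\iff\operatorname{rank}(\Phi(A)-\Phi(B))=1$ for all $A,B\in U$. If $\mathcal{L}\subseteq U$ is a leaf of some hermitian matrix of rank $r-1$, then $\Phi(\mathcal{L})$ is a leaf of some unique hermitian matrix of rank $r-1$.
   Context: $\mathbb{F}_{q^2}$ is the field with $q^2$ elements with involution $\bar x=x^q$, fixed field $\mathbb{F}_q$; $X^\ast=\bar X^\top$; $A$ is hermitian if $A^\ast=A$. Leaf: if $A$ is an $n\times n$ hermitian matrix of rank $s<n$ and $\mathbf{x}\in\mathbb{F}_{q^2}^n$ does not lie in the column space of $A$, then the set $\{A+\lambda\mathbf{x}\mathbf{x}^\ast:\ 0\neq\lambda\in\mathbb{F}_q\}$ (which consists of $q-1$ pairwise adjacent matrices of rank $s+1$) is called a leaf of $A$. Two hermitian matrices are adjacent if their difference has rank one. *)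

(* Defs.v *)
From HB Require Import structures.
From mathcomp Require Import all_boot all_order all_algebra.
Unset Strict Implicit. Unset Printing Implicit Defensive.
Import GRing.Theory.
Local Open Scope ring_scope.

(* F plays the role of F_{q^2}; the involution is x |-> x^q. *)
Definition conjq {F : finFieldType} (q : nat) (x : F) : F := x ^+ q.

Definition mxstar {F : finFieldType} (q : nat) {m k : nat} (X : 'M[F]_(m, k))
  : 'M[F]_(k, m) := (map_mx (conjq q) X)^T.

Definition is_herm {F : finFieldType} (q : nat) {n : nat} (A : 'M[F]_n) : bool :=
  mxstar q A == A.

Definition hermU {F : finFieldType} (q n r : nat) : {set 'M[F]_n} :=
  [set A : 'M[F]_n | is_herm q A && (\rank A == r)].

Definition adjacent {F : finFieldType} {n : nat} (A B : 'M[F]_n) : bool :=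
  \rank (A - B) == 1%N.

Definition fixedq {F : finFieldType} (q : nat) : {set F} :=
  [set x : F | conjq q x == x].

Definition in_colspace {F : finFieldType} {n : nat} (A : 'M[F]_n) (x : 'cV[F]_n) : Prop :=
  exists y : 'cV[F]_n, x = A *m y.

Definition leaf_set {F : finFieldType} (q : nat) {n : nat} (A : 'M[F]_n) (x : 'cV[F]_n)
  : {set 'M[F]_n} :=
  [set A + l *: (x *m mxstar q x) | l in fixedq q :\ 0].

Definition is_leaf {F : finFieldType} (q : nat) {n : nat} (L : {set 'M[F]_n}) (A : 'M[F]_n) : Prop :=
  is_herm q A /\ (\rank A < n)%N /\
  exists x : 'cV[F]_n, ~ in_colspace A x /\ L = leaf_set q A x.

(* Main.v *)
Require Import Defs.
From HB Require Import structures.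
From mathcomp Require Import all_boot all_order all_algebra all_field.
From mathcomp Require Import zify.
Set Implicit Arguments. Unset Strict Implicit. Unset Printing Implicit Defensive.
Import GRing.Theory.
Local Open Scope ring_scope.
Delimit Scope nat_scope with N.

Lemma conjq_add (F : finFieldType) (q : nat) : #|F| = (q ^ 2)%N ->
  forall x y : F, conjq q (x + y) = conjq q x + conjq q y.
Proof.
move=> hF x y; rewrite /conjq.
have [p pr_p pc] := finPcharP F.
have cardF : #|F| = (p ^ logn p #|F|)%N.
  exact: (@card_pprimeChar p F pc).
have : (q %| p ^ logn p #|F|)%N by rewrite -cardF hF dvdn_exp.
case/(dvdn_pfactor _ _ pr_p) => m _ ->.
apply: exprDn_pchar.
by rewrite pnatX (pnatE _ pr_p) pc.
Qed.

Lemma conjq_inv (F : finFieldType) (q : nat) : #|F| = (q ^ 2)%N ->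
  forall x : F, conjq q (conjq q x) = x.
Proof.
move=> hF x; rewrite /conjq -exprM -[(q * q)%N]/(q ^ 2)%N -hF.
exact: expf_card.
Qed.

Lemma fixedq_card3 (F : finFieldType) (q : nat) : (3 <= q)%N -> #|F| = (q ^ 2)%N ->
  (3 <= #|fixedq (F:=F) q|)%N.
Proof.
move=> hq hF; rewrite leqNgt; apply/negP => hsmall.
have f0 : (0:F) \in fixedq q.
    have q0 : (q == 0%N) = false by case: (q) hq.
    by rewrite inE /conjq expr0n q0.
have f1 : (1:F) \in fixedq q by rewrite inE /conjq expr1n.
have fix01 : forall c : F, c \in fixedq q -> c = 0 \/ c = 1.
  move=> c hc; have [->|c0] := eqVneq c 0; first by left.
  have [->|c1] := eqVneq c 1; first by right.
  have : (3 <= #|fixedq (F:=F) q|)%N.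
    rewrite (cardD1 0) f0 (cardD1 1) !inE.
    move: f1; rewrite inE => ->; rewrite oner_eq0 (cardD1 c) !inE.
    move: hc; rewrite inE => ->; rewrite c0 c1 //.
  by rewrite leqNgt hsmall.
have hN : forall x : F, x != 0 -> x ^+ q.+1 = 1.
  move=> x x0.
  have : x ^+ q.+1 \in fixedq q.
    rewrite inE /conjq -exprM mulSn exprD -[(q * q)%N]/(q ^ 2)%N -hF.
    by rewrite expf_card -exprSr.
  case/fix01 => // /eqP; rewrite expf_eq0 /= (negbTE x0) //.
have := @max_unity_roots F q.+1 (enum (predC1 0)) (ltn0Sn _).
rewrite enum_uniq.
have -> : all (root_of_unity q.+1) (enum (predC1 (0:F))).
  apply/allP => x; rewrite mem_enum /= => x0.
  by rewrite unity_rootE hN.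
move=> /(_ isT isT); rewrite -cardE cardC1 hF.
apply/negP; rewrite -ltnNge.
rewrite -ltnS prednK ?expn_gt0; last by case: (q) hq.
idtac.
have : (3 * q <= q * q)%N by rewrite leq_mul2r hq orbT.
rewrite -[(q ^ 2)%N]/(q * q)%N; lia.
Qed.

Lemma ar1 r : (0 < r)%N -> r.-1 = r -> False.
Proof. case: r => //= k _; lia. Qed.
Lemma ar2 r e : (e <= r.+1)%N -> (r <= e + 1)%N -> e != r.+1 -> e != r -> (0 < r)%N -> e = r.-1.
Proof. move=> h1 h2 /eqP h3 /eqP h4; case: r h1 h2 h3 h4 => //= k; lia. Qed.
Lemma ar3 r : (0 < r)%N -> (r <= r.-1)%N -> False.
Proof. case: r => //= k _; lia. Qed.
Lemma ar4 r n : (0 < r)%N -> (r <= n)%N -> (r.-1 < n)%N.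
Proof. case: r => //= k _; lia. Qed.

Section Mx.
Variables (F : finFieldType) (q n0 : nat).
Hypothesis conjD : forall x y : F, conjq q (x + y) = conjq q x + conjq q y.
Hypothesis conjK : forall x : F, conjq q (conjq q x) = x.

Local Notation sg := (@conjq F q).

Lemma conj0 : sg 0 = 0.
Proof. by apply: (addrI (sg 0)); rewrite -conjD !addr0. Qed.
Lemma conjN x : sg (- x) = - sg x.
Proof. by apply: (addrI (sg x)); rewrite -conjD !subrr conj0. Qed.
Lemma conjB : {morph sg : x y / x - y}.
Proof. by move=> x y; rewrite conjD conjN. Qed.
Lemma conjM : {morph sg : x y / x * y}.
Proof. by move=> x y; rewrite /conjq exprMn. Qed.
Lemma conj1 : sg 1 = 1.
Proof. by rewrite /conjq expr1n. Qed.

HB.instance Definition _ := GRing.isZmodMorphism.Build F F sg conjB.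
HB.instance Definition _ := GRing.isMonoidMorphism.Build F F sg (conj1, conjM).

Local Notation st := (@mxstar F q _ _).

Lemma conj_inj : injective sg.
Proof. by move=> x y h; rewrite -(conjK x) h conjK. Qed.
Lemma conj_eq0 x : (sg x == 0) = (x == 0).
Proof. by apply/eqP/eqP => [h|->]; [apply: conj_inj; rewrite h conj0|exact: conj0]. Qed.

Lemma stE m n (X : 'M[F]_(m,n)) i j : st X i j = sg (X j i).
Proof. by rewrite /mxstar !mxE. Qed.
Lemma stK m n (X : 'M[F]_(m,n)) : st (st X) = X.
Proof. by apply/matrixP => i j; rewrite !stE conjK. Qed.
Lemma stD m n (X Y : 'M[F]_(m,n)) : st (X + Y) = st X + st Y.
Proof. by apply/matrixP => i j; rewrite !(stE, mxE) conjD. Qed.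
Lemma stN m n (X : 'M[F]_(m,n)) : st (- X) = - st X.
Proof. by apply/matrixP => i j; rewrite !(stE, mxE) conjN. Qed.
Lemma stB m n (X Y : 'M[F]_(m,n)) : st (X - Y) = st X - st Y.
Proof. by rewrite stD stN. Qed.
Lemma stZ m n c (X : 'M[F]_(m,n)) : st (c *: X) = sg c *: st X.
Proof. by apply/matrixP => i j; rewrite !(stE, mxE) conjM. Qed.
Lemma st0 m n : st (0 : 'M[F]_(m,n)) = 0.
Proof. by apply/matrixP => i j; rewrite !(stE, mxE) conj0. Qed.
Lemma stM m n p (X : 'M[F]_(m,n)) (Y : 'M[F]_(n,p)) : st (X *m Y) = st Y *m st X.
Proof. by rewrite /mxstar map_mxM trmx_mul. Qed.
Lemma st_rank m n (X : 'M[F]_(m,n)) : \rank (st X) = \rank X.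
Proof. by rewrite /mxstar mxrank_tr mxrank_map. Qed.
Lemma st_eq0 m n (X : 'M[F]_(m,n)) : (st X == 0) = (X == 0).
Proof. by apply/eqP/eqP => [h|->]; [rewrite -(stK X) h st0|exact: st0]. Qed.

Lemma fixedP x : reflect (sg x = x) (x \in fixedq q).
Proof. by rewrite inE; apply: eqP. Qed.

Lemma hermP (M : 'M[F]_n0) : is_herm q M -> forall i j, M i j = sg (M j i).
Proof. by move=> /eqP h i j; rewrite -{1}h stE. Qed.

Lemma rank1_minor m n (M : 'M[F]_(m,n)) : (\rank M <= 1)%N ->
  forall i j k l, M i j * M k l = M i l * M k j.
Proof.
move=> hr i j k l.
have [rk0|rkn0] := eqVneq (row k M) 0.
  have e : forall t, M k t = 0 by by move=> t; have := congr1 (fun X : 'M_(1,n) => X ord0 t) rk0; rewrite !mxE.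
  by rewrite !e !mulr0.
have : (row k M <= M)%MS by exact: row_sub.
move/mxrank_leqif_sup => /leqifP.
have r1 : \rank (row k M) = 1%N.
  apply/eqP; rewrite eqn_leq rank_leq_row lt0n mxrank_eq0 rkn0 //.
rewrite r1; case: ifP => [/(submx_trans (row_sub i M))/submxP [D hD] _|_]; last first.
  by rewrite ltnNge hr.
have e : forall t, M i t = D 0 0 * M k t.
  by move=> t; have := congr1 (fun X : 'M_(1,n) => X ord0 t) hD; rewrite !mxE big_ord1 mxE.
by rewrite !e mulrAC.
Qed.

Lemma rank1_herm (M : 'M[F]_n0) : is_herm q M -> \rank M = 1%N ->
  exists l (x : 'cV[F]_n0), [/\ l \in fixedq q, l != 0, x != 0 & M = l *: (x *m st x)].
Proof.
move=> hM hr.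
have hm := rank1_minor (eq_leq hr).
have [[i0 j0] /= nz | h] := pickP (fun ij : 'I_n0 * 'I_n0 => M ij.1 ij.2 != 0); last first.
  have : M == 0.
    by apply/eqP/matrixP => i j; move: (h (i, j)) => /= /negbFE /eqP ->; rewrite mxE.
  by rewrite -mxrank_eq0 hr.
have nzd : M i0 i0 != 0.
  apply: contra nz => /eqP z.
  have := hm i0 i0 j0 j0; rewrite z mul0r (hermP hM j0 i0) => /esym/eqP.
  by rewrite mulf_eq0 conj_eq0 orbb.
set d := M i0 i0.
have fd : sg d = d by rewrite /d -hermP.
exists d^-1, (col i0 M); split.
- by apply/fixedP; rewrite /conjq exprVn -/(conjq q d) fd.
- by rewrite invr_eq0.
- by apply: contraNneq nzd => h; have := congr1 (fun X : 'cV_n0 => X i0 ord0) h; rewrite !mxE => ->.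
apply/matrixP => a b; rewrite !mxE big_ord1 !mxE.
by rewrite -(hermP hM i0 b) (hm a i0 i0 b) mulrC mulfK.
Qed.
Lemma hermD (A B : 'M[F]_n0) : is_herm q A -> is_herm q B -> is_herm q (A + B).
Proof. by rewrite /is_herm stD => /eqP-> /eqP->. Qed.
Lemma hermB (A B : 'M[F]_n0) : is_herm q A -> is_herm q B -> is_herm q (A - B).
Proof. by rewrite /is_herm stB => /eqP-> /eqP->. Qed.
Lemma herm_xx l (x : 'cV[F]_n0) : l \in fixedq q -> is_herm q (l *: (x *m st x)).
Proof. by move/fixedP => hl; rewrite /is_herm stZ stM stK hl. Qed.
Lemma xx_neq0 (x : 'cV[F]_n0) : x != 0 -> x *m st x != 0.
Proof.
move=> x0; have /existsP [i xi] : [exists i, x i 0 != 0].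
  apply: contraNT x0 => /existsPn h.
  by apply/eqP/matrixP => i j; rewrite ord1 mxE; move: (h i); rewrite negbK => /eqP.
apply/eqP => /matrixP /(_ i i); rewrite !mxE big_ord1 stE => /eqP.
by rewrite mulf_eq0 conj_eq0 orbb (negbTE xi).
Qed.
Lemma rank_xx l (x : 'cV[F]_n0) : l != 0 -> x != 0 -> \rank (l *: (x *m st x)) = 1%N.
Proof.
move=> l0 x0; apply/eqP; rewrite eqn_leq; apply/andP; split.
  by rewrite scalemxAl (leq_trans (mxrankM_maxl _ _)) // rank_leq_col.
by rewrite lt0n mxrank_eq0 scaler_eq0 negb_or l0 xx_neq0.
Qed.

Lemma collinear (l m : F) (x y : 'cV[F]_n0) : l != 0 -> m != 0 -> x != 0 -> y != 0 ->
  (\rank (l *: (x *m st x) - m *: (y *m st y))%R <= 1)%N ->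
  exists2 c, c \in fixedq q & y *m st y = c *: (x *m st x).
Proof.
move=> l0 m0 x0 y0 hr.
set P := row_mx x y.
have [h2|h1] := leqP 2 (\rank P).
  have : row_free P^T.
    by rewrite /row_free mxrank_tr eqn_leq rank_leq_col h2.
  case/row_freeP => B hB.
  set R := col_mx (l *: st x) (- m *: st y) : 'M_(1 + 1, n0).
  have hPR : P *m R = l *: (x *m st x) - m *: (y *m st y).
    by rewrite mul_row_col -!scalemxAr scaleNr.
  have hBR : B^T *m (l *: (x *m st x) - m *: (y *m st y)) = R.
    by rewrite -hPR mulmxA -[B^T *m P]trmxK trmx_mul trmxK hB trmx1 mul1mx.
  have hRle : (\rank R <= 1)%N by rewrite -hBR (leq_trans (mxrankM_maxr _ _)).
  have := submx_refl R; rewrite col_mx_sub => /andP [s1 s2].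
  have s1' : (st x <= R)%MS.
    by rewrite -[st x](scalerK l0) scalemx_sub.
  have s2' : (st y <= R)%MS.
    have m0' : - m != 0 by rewrite oppr_eq0.
    by rewrite -[st y](scalerK m0') scalemx_sub.
  have : (col_mx (st x) (st y) <= R)%MS by rewrite col_mx_sub s1' s2'.
  move/mxrankS; have -> : col_mx (st x) (st y) = st P.
    by rewrite /mxstar map_row_mx tr_row_mx.
  rewrite st_rank => h; have := leq_trans h2 (leq_trans h hRle); by [].
have hm := rank1_minor h1.
have /existsP [k xk] : [exists k, x k 0 != 0].
  apply: contraNT x0 => /existsPn h.
  by apply/eqP/matrixP => i j; rewrite ord1 mxE; move: (h i); rewrite negbK => /eqP.
set c0 := y k 0 / x k 0.
have hy : y = c0 *: x.
  apply/matrixP => i j; rewrite ord1 mxE.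
  have := hm i (lshift 1 0) k (rshift 1 0).
  rewrite /P !(row_mxEl, row_mxEr) => e.
  by rewrite /c0 mulrAC [y k 0 * _]mulrC e mulfK.
exists (c0 * sg c0).
  by apply/fixedP; rewrite conjM conjK mulrC.
by rewrite hy stZ -scalemxAr -scalemxAl scalerA mulrC.
Qed.

Lemma rank_tri (A B : 'M[F]_n0) : (\rank A <= \rank B + \rank (A - B)%R)%N.
Proof. by rewrite -{1}(addrNK B A) addrC (leq_trans (mxrank_add _ _)) // addnC. Qed.

Lemma kern_vec (E : 'M[F]_n0) (y : 'cV[F]_n0) l :
  (\rank (E + l *: (y *m st y))%R < \rank E)%N ->
  exists u : 'rV[F]_n0, u *m (E + l *: (y *m st y)) = 0 /\ (u *m y) 0 0 != 0.
Proof.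
set P := (E + _)%R => hr.
set K := kermx P.
have [hK|] := eqVneq (K *m y) 0.
  have : (K <= kermx E)%MS.
    rewrite sub_kermx; apply/eqP.
    have -> : E = P - l *: (y *m st y) by rewrite /P addrK.
    by rewrite mulmxBr mulmx_ker -scalemxAr mulmxA hK mul0mx scaler0 subrr.
  move/mxrankS; rewrite !mxrank_ker => h.
  have := rank_leq_row E; lia.
move=> hK0; have /existsP [i hi] : [exists i, (K *m y) i 0 != 0].
  apply: contraNT hK0 => /existsPn h.
  by apply/eqP/matrixP => i j; rewrite ord1 [RHS]mxE; move: (h i); rewrite negbK => /eqP.
exists (row i K); split; first by rewrite -row_mul mulmx_ker row0.
by rewrite -row_mul mxE.
Qed.

Lemma drop_unique (E : 'M[F]_n0) (y : 'cV[F]_n0) l1 l2 : is_herm q E -> l2 \in fixedq q ->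
  (\rank (E + l1 *: (y *m st y))%R < \rank E)%N ->
  (\rank (E + l2 *: (y *m st y))%R < \rank E)%N -> l1 = l2.
Proof.
move=> /eqP hE /fixedP hl2 /kern_vec [u1 [h1 t1]] /kern_vec [u2 [h2 t2]].
have e1 : u1 *m E = - (l1 *: (u1 *m y *m st y)).
  by apply/eqP; rewrite -addr_eq0 -mulmxA scalemxAr -mulmxDr h1.
have e2 : u2 *m E = - (l2 *: (u2 *m y *m st y)).
  by apply/eqP; rewrite -addr_eq0 -mulmxA scalemxAr -mulmxDr h2.
have eR : E *m st u2 = - (l2 *: (y *m st (u2 *m y))).
  by rewrite -{1}hE -stM e2 stN stZ stM stK hl2.
have := mulmxA u1 E (st u2); rewrite e1 eR.
rewrite mulNmx -scalemxAl -[u1 *m y *m st y *m st u2]mulmxA -stM.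
rewrite mulmxN -scalemxAr mulmxA.
move/oppr_inj/matrixP/(_ 0 0); rewrite !mxE big_ord1 stE => /mulIf h; apply/esym/h.
by rewrite mulf_eq0 negb_or t1 conj_eq0 t2.
Qed.

Lemma rank_colsp (E : 'M[F]_n0) (y w : 'cV[F]_n0) l : y = E *m w ->
  (\rank (E + l *: (y *m st y))%R <= \rank E)%N.
Proof.
move=> ->; have -> : (E + l *: (E *m w *m st (E *m w)) = E *m (1%:M + l *: (w *m st (E *m w))))%R.
  by rewrite mulmxDr mulmx1 -scalemxAr mulmxA.
exact: mxrankM_maxl.
Qed.

Lemma subsc (U W : 'M[F]_n0) c d : (U + c *: W) - (U + d *: W) = (c - d) *: W.
Proof. by rewrite opprD addrACA subrr add0r scalerBl. Qed.

Lemma fixed0 : (0 : F) \in fixedq q. Proof. by apply/fixedP; rewrite conj0. Qed.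
Lemma fixedD (a b : F) : a \in fixedq q -> b \in fixedq q -> a + b \in fixedq q.
Proof. by move=> /fixedP ha /fixedP hb; apply/fixedP; rewrite conjD ha hb. Qed.
Lemma fixedB (a b : F) : a \in fixedq q -> b \in fixedq q -> a - b \in fixedq q.
Proof. by move=> /fixedP ha /fixedP hb; apply/fixedP; rewrite conjB ha hb. Qed.
Lemma fixedM (a b : F) : a \in fixedq q -> b \in fixedq q -> a * b \in fixedq q.
Proof. by move=> /fixedP ha /fixedP hb; apply/fixedP; rewrite conjM ha hb. Qed.
Lemma fixedV (a : F) : a \in fixedq q -> a^-1 \in fixedq q.
Proof. by move=> /fixedP ha; apply/fixedP; rewrite /conjq exprVn -/(conjq q a) ha. Qed.

Lemma scal_inj (Y : 'M[F]_n0) a b : Y != 0 -> a *: Y = b *: Y -> a = b.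
Proof.
move=> Y0 /eqP; rewrite -subr_eq0 -scalerBl scaler_eq0 (negbTE Y0) orbF subr_eq0.
by move/eqP.
Qed.

Lemma rankBC (A B : 'M[F]_n0) : \rank (A - B) = \rank (B - A).
Proof. by rewrite -opprB mxrank_opp. Qed.

Lemma on_line (N1 N2 N : 'M[F]_n0) (y : 'cV[F]_n0) nu :
  is_herm q N1 -> is_herm q N -> N2 - N1 = nu *: (y *m st y) -> nu != 0 -> y != 0 ->
  \rank (N - N1) = 1%N -> \rank (N - N2) = 1%N ->
  exists2 l, l \in fixedq q & N = N1 + l *: (y *m st y).
Proof.
move=> h1 h e n0' y0 r1 r2.
have [mu [z [fmu mu0 z0 ez]]] := rank1_herm (hermB h h1) r1.
have [c hc ec] : exists2 c, c \in fixedq q & z *m st z = c *: (y *m st y).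
  apply: (collinear n0' mu0 y0 z0).
  have -> : nu *: (y *m st y) - mu *: (z *m st z) = - (N - N2).
    by rewrite -ez -e !opprB addrA subrK.
  by rewrite mxrank_opp r2.
exists (mu * c); first exact: fixedM.
by rewrite -scalerA -ec -ez addrC subrK.
Qed.

Lemma main_sec (r : nat) (fix3 : (3 <= #|fixedq (F:=F) q|)%N)
  (hr1 : (1 <= r)%N) (hrn : (r <= n0)%N)
  (Phi : 'M[F]_n0 -> 'M[F]_n0)
  (Phi_into : forall A, A \in hermU q n0 r -> Phi A \in hermU q n0 r)
  (Phi_inj : {in hermU q n0 r &, injective Phi})
  (Phi_onto : forall B, B \in hermU q n0 r -> exists2 A, A \in hermU q n0 r & Phi A = B)
  (Phi_adj : {in hermU q n0 r &, forall A B, adjacent A B = adjacent (Phi A) (Phi B)})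
  (L : {set 'M[F]_n0}) (A : 'M[F]_n0)
  (hLU : L \subset hermU q n0 r)
  (hA : is_herm q A) (hrA : \rank A = r.-1)
  (hL : is_leaf q L A) :
  exists! B : 'M[F]_n0,
    is_herm q B /\ \rank B = r.-1 /\ is_leaf q (Phi @: L) B.
Proof.
have inU : forall M : 'M[F]_n0, (M \in hermU q n0 r) = is_herm q M && (\rank M == r).
  by move=> M; rewrite /hermU inE.
case: hL => _ [hAn [x [hx hLe]]].
have x0 : x != 0 by apply: contra_not_neq hx => ->; exists 0; rewrite mulmx0.
set S := @fixedq F q.
set Y := x *m st x.
have Y0 : Y != 0 by exact: xx_neq0.
have S0 : (0 : F) \in S by exact: fixed0.
have [a [b [aS bS a0 b0 ab]]] : exists (a b : F), [/\ a \in S, b \in S, a != 0, b != 0 & a != b].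
  have h2 : (1 < #|S :\ 0%R|)%N by move: fix3; rewrite (cardsD1 (0:F) S) S0.
  have /card_gt0P [a ha] : (0 < #|S :\ 0%R|)%N by apply: ltn_trans h2.
  have /card_gt0P [b hb] : (0 < #|S :\ 0%R :\ a|)%N.
    by move: h2; rewrite (cardsD1 a (S :\ 0)) ha.
  move: ha hb; rewrite !inE => /andP [a0 aS] /and3P [ba b0 bS].
  by exists a, b; split; rewrite ?inE // eq_sym.
pose g := fun l : F => A + l *: Y.
have g_inj : injective g by move=> l l' /addrI /(scal_inj Y0).
have hLg : L = g @: (S :\ 0%R) by rewrite hLe.
have cardL : #|L| = #|S|.-1 by rewrite hLg card_imset // (cardsD1 0%R S) S0.
have gL : forall c, c \in S -> c != 0 -> g c \in L.
  by move=> c cS c0; rewrite hLg; apply: imset_f; rewrite in_setD1 c0 cS.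
have LU : forall M, M \in L -> M \in hermU q n0 r by move=> M; apply: (subsetP hLU).
have gB : forall c d, g c - g d = (c - d) *: Y.
  by move=> c d; rewrite /g opprD addrACA subrr add0r scalerBl.
have adjC : forall M N : 'M[F]_n0, adjacent M N = adjacent N M.
  by move=> M N; rewrite /adjacent rankBC.
have adjg : forall c d, c != d -> adjacent (g c) (g d).
  by move=> c d cd; rewrite /adjacent gB rank_xx ?subr_eq0.
have M1L := gL a aS a0; have M2L := gL b bS b0.
set M1 := g a in M1L *; set M2 := g b in M2L *.
have N12 : adjacent (Phi M1) (Phi M2) by rewrite -Phi_adj ?LU // adjg.
have PU : forall M, M \in L -> is_herm q (Phi M) /\ \rank (Phi M) = r.
  by move=> M /LU /Phi_into; rewrite inU => /andP [-> /eqP].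
have [hN1 rN1] := PU _ M1L; have [hN2 rN2] := PU _ M2L.
set N1 := Phi M1 in N12 hN1 rN1 *; set N2 := Phi M2 in N12 hN2 rN2 *.
have rN21 : \rank (N2 - N1) = 1%N by apply/eqP; rewrite rankBC.
have [nu [y [nuS nu0 y0 ey]]] := rank1_herm (hermB hN2 hN1) rN21.
set Yy := y *m st y in ey *.
have Yy0 : Yy != 0 by exact: xx_neq0.
set ell := [set N1 + l *: Yy | l in S].
have sub : Phi @: L \subset ell.
  apply/subsetP => Z /imsetP [M ML ->].
  have ML' := ML; rewrite hLg in ML'; case/imsetP: ML' => c; rewrite in_setD1 => /andP [c0 cS] ->.
  have [->|ca] := eqVneq c a.
    by apply/imsetP; exists 0%R => //; rewrite scale0r addr0.
  have [->|cb] := eqVneq c b.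
    by apply/imsetP; exists nu => //; rewrite -ey addrC subrK.
  have [hZ _] := PU _ (gL c cS c0).
  have gcL := gL c cS c0.
  have r1 : \rank (Phi (g c) - N1) = 1%N.
    by apply/eqP; rewrite -[_ == _]/(adjacent _ _) -Phi_adj ?LU // adjg.
  have r2 : \rank (Phi (g c) - N2) = 1%N.
    by apply/eqP; rewrite -[_ == _]/(adjacent _ _) -Phi_adj ?LU // adjg.
  have [l lS el] := on_line hN1 hZ ey nu0 y0 r1 r2.
  by apply/imsetP; exists l.
pose h := fun l : F => N1 + l *: Yy.
have h_inj : injective h by move=> l l' /addrI /(scal_inj Yy0).
have cardell : #|ell| = #|S| by rewrite card_imset.
have cardPL : #|Phi @: L| = #|L|.
  by rewrite card_in_imset //; apply: sub_in2 Phi_inj => M; apply: LU.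
have cardD : #|ell :\: Phi @: L| = 1%N.
  rewrite cardsD (setIidPr sub) cardPL cardL cardell.
  by move: fix3; case: #|S| => // k _; rewrite subSn // subnn.
have /cards1P [E hE] : #|ell :\: Phi @: L| == 1%N by rewrite cardD.
have : E \in ell :\: Phi @: L by rewrite hE set11.
rewrite in_setD => /andP [EnPL Eell].
case/imsetP: Eell => l0 l0S eE.
have PLeq : Phi @: L = leaf_set q E y.
  apply/setP => Z; apply/idP/idP.
    move=> ZPL; have := subsetP sub Z ZPL; case/imsetP => l lS eZ.
    apply/imsetP; exists (l - l0).
      rewrite in_setD1 fixedB // andbT subr_eq0.
      by apply: contraNneq EnPL => e; rewrite eE -e -eZ.
    by rewrite eZ eE -addrA -scalerDl [l0 + _]addrC subrK.
  case/imsetP => l; rewrite in_setD1 => /andP [l0' lS] ->.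
  apply: contraT => hn.
  have : E + l *: Yy \in ell :\: Phi @: L.
    rewrite in_setD hn /=; apply/imsetP; exists (l0 + l); first exact: fixedD.
    by rewrite eE -addrA -scalerDl.
  rewrite hE inE -{2}[E]addr0 => /eqP /addrI /eqP.
  by rewrite scaler_eq0 (negbTE l0') (negbTE Yy0).
have hEh : is_herm q E by rewrite eE; apply: hermD => //; apply: herm_xx.
have PLr : forall l, l \in S -> l != 0 -> \rank (E + l *: Yy)%R = r.
  move=> l lS l0'; have : E + l *: Yy \in Phi @: L.
    by rewrite PLeq; apply: imset_f; rewrite in_setD1 l0' lS.
  by case/imsetP => M ML eM; rewrite eM; exact: (PU M ML).2.
have rE1 : (\rank E <= r.+1)%N.
  have := rank_tri E (E + a *: Yy).
  have -> : E - (E + a *: Yy) = - (a *: Yy) by rewrite opprD addrA subrr add0r.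
  by rewrite mxrank_opp rank_xx // PLr // addn1.
have rE2 : (r <= \rank E + 1)%N.
  have := rank_tri (E + a *: Yy) E.
  by rewrite addrAC subrr add0r rank_xx // PLr.
have rEn1 : \rank E != r.+1.
  apply/eqP => h1; move/eqP: ab; apply.
  by apply: (drop_unique (y:=y) hEh bS); rewrite h1 PLr.
have adjE : forall Z, Z \in Phi @: L -> adjacent Z E.
  move=> Z; rewrite PLeq => /imsetP [l]; rewrite in_setD1 => /andP [l0' lS] ->.
  by rewrite /adjacent addrAC subrr add0r rank_xx.
have rEn : \rank E != r.
  apply/eqP => hEr.
  have EU : E \in hermU q n0 r by rewrite inU hEh hEr eqxx.
  case: (Phi_onto _ EU) => E' E'U hE'.
  have E'nL : E' \notin L by apply: contra EnPL => hh; rewrite -hE'; apply: imset_f.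
  have hM1 : is_herm q M1 by move: (LU _ M1L); rewrite inU => /andP [].
  have hE'h : is_herm q E' by move: E'U; rewrite inU => /andP [].
  have r1 : \rank (E' - M1) = 1%N.
    apply/eqP; rewrite -[_ == _]/(adjacent _ _) (Phi_adj _ _ E'U (LU _ M1L)) hE' adjC.
    by apply: adjE; apply: imset_f.
  have r2 : \rank (E' - M2) = 1%N.
    apply/eqP; rewrite -[_ == _]/(adjacent _ _) (Phi_adj _ _ E'U (LU _ M2L)) hE' adjC.
    by apply: adjE; apply: imset_f.
  have ba0 : b - a != 0 by rewrite subr_eq0 eq_sym.
  have [l lS el] := on_line hM1 hE'h (gB b a) ba0 x0 r1 r2.
  have eg : E' = g (a + l) by rewrite el /M1 /g -addrA -scalerDl.
  have [al0|al0] := eqVneq (a + l) 0.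
    move: E'U; rewrite inU eg al0 /g scale0r addr0 hrA => /andP [_ /eqP hh].
    exact: ar1 hr1 hh.
  by move: E'nL; rewrite eg gL // fixedD.
have rEr : \rank E = r.-1.
  exact: ar2 rE1 rE2 rEn1 rEn hr1.
have ync : ~ in_colspace E y.
  case => w hw; have := rank_colsp a hw; rewrite PLr // rEr.
  exact: ar3 hr1.
exists E; split.
  split => //; split => //; split => //; split.
    by rewrite rEr; exact: ar4 hr1 hrn.
  by exists y; split.
move=> B [hB [rB [_ [_ [z [hz hBe]]]]]].
have z0 : z != 0 by apply: contra_not_neq hz => ->; exists 0; rewrite mulmx0.
set Zz := z *m st z in hBe *.
have B1 : B + a *: Zz \in Phi @: L.
  by rewrite hBe; apply: imset_f; rewrite in_setD1 a0 aS.
have B2 : B + b *: Zz \in Phi @: L.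
  by rewrite hBe; apply: imset_f; rewrite in_setD1 b0 bS.
move: (subsetP sub _ B1) (subsetP sub _ B2) => /imsetP [l1 l1S e1] /imsetP [l2 l2S e2].
have eZ : (b - a) *: Zz = (l2 - l1) *: Yy.
  by rewrite -(subsc B) -(subsc N1) e1 e2.
have ba0 : b - a != 0 by rewrite subr_eq0 eq_sym.
have eZ' : Zz = ((b - a)^-1 * (l2 - l1)) *: Yy by rewrite -scalerA -eZ scalerA mulVf // scale1r.
have Bell : B \in ell.
  apply/imsetP; exists (l1 - a * ((b - a)^-1 * (l2 - l1))).
    exact: fixedB l1S (fixedM aS (fixedM (fixedV (fixedB bS aS)) (fixedB l2S l1S))).
  have : B = (B + a *: Zz) - a *: Zz by rewrite addrK.
  by rewrite e1 eZ' scalerA => ->; rewrite scalerBl addrA.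
have BnPL : B \notin Phi @: L.
  apply/negP => /imsetP [M ML eB]; have := (PU M ML).2; rewrite -eB rB.
  exact: ar1 hr1.
have : B \in ell :\: Phi @: L by rewrite in_setD BnPL Bell.
by rewrite hE inE => /eqP.
Qed.
End Mx.

Theorem lemma2p4 (F : finFieldType) (q n r : nat)
  (hq : (3 <= q)%N) (hF : #|F| = (q ^ 2)%N) (hn : (2 <= n)%N)
  (hr1 : (1 <= r)%N) (hrn : (r <= n)%N)
  (Phi : 'M[F]_n -> 'M[F]_n)
  (Phi_into : forall A, A \in hermU q n r -> Phi A \in hermU q n r)
  (Phi_inj : {in hermU q n r &, injective Phi})
  (Phi_onto : forall B, B \in hermU q n r -> exists2 A, A \in hermU q n r & Phi A = B)
  (Phi_adj : {in hermU q n r &, forall A B, adjacent A B = adjacent (Phi A) (Phi B)})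
  (L : {set 'M[F]_n}) (A : 'M[F]_n)
  (hLU : L \subset hermU q n r)
  (hA : is_herm q A) (hrA : \rank A = r.-1)
  (hL : is_leaf q L A) :
  exists! B : 'M[F]_n,
    is_herm q B /\ \rank B = r.-1 /\ is_leaf q (Phi @: L) B.
Proof.
exact: (main_sec (conjq_add hF) (conjq_inv hF) (fixedq_card3 hq hF) hr1 hrn
  Phi_into Phi_inj Phi_onto Phi_adj hLU hA hrA hL).
Qed.
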